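(* Let $\Sigma$ be a linear subspace of $\mathbb{R}^d$ and $\zeta_n\in\Sigma\cap S^{d-1}$. Then, after passing to a subsequence, there exist orthonormal vectors $\zeta^1,\dots,\zeta^k\in\Sigma$, with $1\le k\le\dim\Sigma$, such that $E(\zeta_n)\to E(\zeta^1,\dots,\zeta^k)$ as $n\to\infty$, in the sense that for every $z\in\mathbb{Z}^d$, $\mathbf 1_{E(\zeta_n)}(z)\to\mathbf 1_{E(\zeta^1,\dots,\zeta^k)}(z)$.
   Context: For an orthogonal collection of nonzero vectors $\zeta^1,\dots,\zeta^k\in\mathbb{R}^d$, $E(\zeta^1,\dots,\zeta^k)=\bigcup_{j=1}^k\{z\in\mathbb{Z}^d: z\cdot\zeta^i=0\text{ for all }1\le i\le j-1,\ \text{and } z\cdot\zeta^j>0\}$ (for $j=1$ the first condition is vacuous). In particular $E(\zeta)=\{z\in\mathbb{Z}^d:z\cdot\zeta>0\}$. *)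

(* Defs.v *)
From Stdlib Require Import Reals ZArith List ClassicalEpsilon.
Open Scope R_scope.

(* Vectors of R^d are represented by functions nat -> R whose coordinates
   with index >= d vanish; points of Z^d by functions nat -> Z (only the
   coordinates of index < d are ever used). *)
Definition vec := nat -> R.
Definition zvec := nat -> Z.

Definition vzero : vec := fun _ => 0.

Fixpoint sumR (n : nat) (f : nat -> R) : R :=
  match n with
  | O => 0
  | S m => sumR m f + f m
  end.

Definition in_Rd (d : nat) (x : vec) : Prop := forall i, (d <= i)%nat -> x i = 0.

Definition dot (d : nat) (x y : vec) : R := sumR d (fun i => x i * y i).

Definition zdot (d : nat) (z : zvec) (zeta : vec) : R :=
  sumR d (fun i => IZR (z i) * zeta i).

Definition is_subspace (d : nat) (S : vec -> Prop) : Prop :=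
  (forall x, S x -> in_Rd d x) /\
  S vzero /\
  (forall x y, S x -> S y -> S (fun i => x i + y i)) /\
  (forall (a : R) x, S x -> S (fun i => a * x i)).

Definition lincomb (c : list R) (B : list vec) : vec :=
  fun i => sumR (length B) (fun j => nth j c 0 * nth j B vzero i).

Definition lin_indep (B : list vec) : Prop :=
  forall c : list R, length c = length B ->
    (forall i, lincomb c B i = 0) -> forall j, (j < length B)%nat -> nth j c 0 = 0.

(* B is a basis of the subspace S; dim S = length B *)
Definition basis_of (S : vec -> Prop) (B : list vec) : Prop :=
  (forall j, (j < length B)%nat -> S (nth j B vzero)) /\
  lin_indep B /\
  (forall x, S x -> exists c, length c = length B /\ forall i, x i = lincomb c B i).

Definition Ezeta (d : nat) (zeta : vec) (z : zvec) : Prop := zdot d z zeta > 0.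

(* E(zeta^1, ..., zeta^k), the zeta^j given as a list (0-indexed) *)
Definition Ezetas (d : nat) (zs : list vec) (z : zvec) : Prop :=
  exists j, (j < length zs)%nat /\
    (forall i, (i < j)%nat -> zdot d z (nth i zs vzero) = 0) /\
    zdot d z (nth j zs vzero) > 0.

Definition orthonormal (d : nat) (zs : list vec) : Prop :=
  forall i j, (i < length zs)%nat -> (j < length zs)%nat ->
    dot d (nth i zs vzero) (nth j zs vzero) = if Nat.eqb i j then 1 else 0.

Definition indic (P : Prop) : R :=
  if excluded_middle_informative P then 1 else 0.

(* Main.v *)
Require Import Defs.
From Stdlib Require Import Reals ZArith List ClassicalEpsilon Classical Lia Lra FunctionalExtensionality.
From HB Require Import structures.
From mathcomp Require all_boot all_order all_algebra Rstruct.
Open Scope R_scope.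

Module MC.
Import all_boot all_order all_algebra Rstruct.
Import Order.TTheory GRing.Theory Num.Theory.
Local Open Scope ring_scope.

Lemma sumR_big (n : nat) (f : nat -> R) : sumR n f = \sum_(j < n) f j.
Proof.
elim: n => [|n IH] /=; first by rewrite big_ord0.
by rewrite big_ord_recr /= IH.
Qed.

Lemma rank_core (k n d : nat) (A : 'M[R]_(k,d)) (Cm : 'M[R]_(k,n)) (Bm : 'M[R]_(n,d)) :
  A *m A^T = 1%:M -> A = Cm *m Bm -> (k <= n)%N.
Proof.
move=> h1 h2.
have : \rank (A *m A^T) = k by rewrite h1 mxrank1.
move=> <-.
apply: leq_trans (mxrankM_maxl _ _) _.
rewrite h2.
apply: leq_trans (mxrankM_maxl _ _) _.
exact: rank_leq_col.
Qed.

Lemma rank_core_d (k d : nat) (A : 'M[R]_(k,d)) :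
  A *m A^T = 1%:M -> (k <= d)%N.
Proof.
move=> h1.
have : \rank (A *m A^T) = k by rewrite h1 mxrank1.
move=> <-.
apply: leq_trans (mxrankM_maxl _ _) _.
exact: rank_leq_col.
Qed.

Definition matA (k d : nat) (A : list vec) : 'M[R]_(k,d) := \matrix_(i < k, t < d) List.nth i A vzero t.

Lemma matA_orth (d : nat) (A : list vec) : Defs.orthonormal d A ->
  matA (length A) d A *m (matA (length A) d A)^T = 1%:M.
Proof.
move=> hA; apply/matrixP => i j.
rewrite !mxE.
have := hA i j (elimT ssrnat.ltP (ltn_ord i)) (elimT ssrnat.ltP (ltn_ord j)).
rewrite /dot sumR_big => h.
have -> : (\sum_j0 matA (length A) d A i j0 * (matA (length A) d A)^T j0 j) = \sum_(t < d) List.nth i A vzero t * List.nth j A vzero t.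
  by apply: eq_bigr => t _; rewrite !mxE.
rewrite h.
case: (Nat.eqb_spec i j) => [e|ne].
  have -> : i = j by apply: val_inj.
  by rewrite eqxx.
have -> : (i == j) = false by apply/eqP => e; apply: ne; rewrite e.
by [].
Qed.

Lemma orth_bound_d (d : nat) (A : list vec) : Defs.orthonormal d A -> (length A <= d)%coq_nat.
Proof.
move=> hA; apply/ssrnat.leP; have := @rank_core_d _ _ _ (@matA_orth d A hA); exact.
Qed.

Lemma orth_rank_bound (d n : nat) (A B : list vec) (C : nat -> nat -> R) :
  Defs.orthonormal d A ->
  (forall i t, (i < length A)%coq_nat -> (t < d)%coq_nat ->
     List.nth i A vzero t = sumR n (fun j => C i j * List.nth j B vzero t)) ->
  (length A <= n)%coq_nat.
Proof.
move=> hA hC; apply/ssrnat.leP.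
apply: (@rank_core _ _ _ _ (\matrix_(i < length A, j < n) C i j) (matA n d B) (@matA_orth d A hA)).
apply/matrixP => i t; rewrite !mxE hC; last by apply/ssrnat.ltP.
  rewrite sumR_big; apply: eq_bigr => j _; by rewrite !mxE.
by apply/ssrnat.ltP.
Qed.
End MC.


Lemma sumR_ext n f g : (forall i, (i < n)%nat -> f i = g i) -> sumR n f = sumR n g.
Proof.
  induction n; intros H; simpl; auto.
  rewrite IHn by (intros; apply H; lia). rewrite H by lia. auto.
Qed.

Lemma sumR_plus n f g : sumR n (fun i => f i + g i) = sumR n f + sumR n g.
Proof. induction n; simpl; [lra|rewrite IHn; lra]. Qed.

Lemma sumR_scal n a f : sumR n (fun i => a * f i) = a * sumR n f.
Proof. induction n; simpl; [lra|rewrite IHn; lra]. Qed.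

Lemma sumR_zero n : sumR n (fun _ => 0) = 0.
Proof. induction n; simpl; [lra|rewrite IHn; lra]. Qed.

Lemma sumR_nonneg n f : (forall i, (i < n)%nat -> 0 <= f i) -> 0 <= sumR n f.
Proof.
  induction n; intros H; simpl; [lra|].
  assert (0 <= sumR n f) by (apply IHn; intros; apply H; lia).
  assert (0 <= f n) by (apply H; lia). lra.
Qed.

Lemma sumR_term_le n f i : (forall j, (j < n)%nat -> 0 <= f j) -> (i < n)%nat -> f i <= sumR n f.
Proof.
  induction n; intros H Hi; simpl; [lia|].
  destruct (Nat.eq_dec i n) as [->|ne].
  - assert (0 <= sumR n f) by (apply sumR_nonneg; intros; apply H; lia). lra.
  - assert (f i <= sumR n f) by (apply IHn; [intros; apply H; lia | lia]).
    assert (0 <= f n) by (apply H; lia). lra.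
Qed.

Lemma sumR_swap n m (F : nat -> nat -> R) :
  sumR n (fun i => sumR m (fun j => F i j)) = sumR m (fun j => sumR n (fun i => F i j)).
Proof.
  induction n; simpl.
  - rewrite sumR_zero; auto.
  - rewrite IHn. rewrite <- sumR_plus. auto.
Qed.

Lemma sumR_delta n (a : nat -> R) j : (j < n)%nat ->
  sumR n (fun i => a i * (if Nat.eqb i j then 1 else 0)) = a j.
Proof.
  induction n; intros Hj; simpl; [lia|].
  destruct (Nat.eq_dec j n) as [->|ne].
  - rewrite Nat.eqb_refl.
    rewrite (sumR_ext n _ (fun _ => 0)). rewrite sumR_zero; lra.
    intros i Hi. replace (Nat.eqb i n) with false. lra. symmetry; apply Nat.eqb_neq; lia.
  - rewrite IHn by lia. replace (Nat.eqb n j) with false. lra. symmetry; apply Nat.eqb_neq; lia.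
Qed.

Lemma sumR_cv n (f : nat -> nat -> R) (l : nat -> R) :
  (forall i, (i < n)%nat -> Un_cv (fun k => f k i) (l i)) ->
  Un_cv (fun k => sumR n (f k)) (sumR n l).
Proof.
  induction n; intros H; simpl.
  - intros eps Heps. exists 0%nat. intros. unfold Rdist. rewrite Rminus_diag, Rabs_R0. auto.
  - apply CV_plus. apply IHn; intros; apply H; lia. apply H; lia.
Qed.

Lemma dot_sym d x y : dot d x y = dot d y x.
Proof. unfold dot. apply sumR_ext. intros; lra. Qed.

Lemma dot_nonneg d x : 0 <= dot d x x.
Proof. unfold dot. apply sumR_nonneg. intros. nra. Qed.

Lemma dot_zero d x : dot d x x = 0 -> forall t, (t < d)%nat -> x t = 0.
Proof.
  intros H t Ht.
  assert (x t * x t <= dot d x x) by (apply (sumR_term_le d (fun i => x i * x i)); [intros; nra|auto]).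
  nra.
Qed.

Lemma coord_bound d x t : dot d x x = 1 -> (t < d)%nat -> -1 <= x t <= 1.
Proof.
  intros H Ht.
  assert (x t * x t <= dot d x x) by (apply (sumR_term_le d (fun i => x i * x i)); [intros; nra|auto]).
  split; nra.
Qed.

Lemma dot_cv d (u : nat -> vec) x y :
  (forall t, Un_cv (fun n => u n t) (x t)) -> Un_cv (fun n => dot d (u n) y) (dot d x y).
Proof.
  intros H. unfold dot. apply (sumR_cv d (fun n i => u n i * y i)).
  intros i _. apply CV_mult. apply H. intros eps Heps; exists 0%nat; intros; unfold Rdist;
  rewrite Rminus_diag, Rabs_R0; auto.
Qed.

Lemma dot_cv2 d (u : nat -> vec) x :
  (forall t, Un_cv (fun n => u n t) (x t)) -> Un_cv (fun n => dot d (u n) (u n)) (dot d x x).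
Proof.
  intros H. unfold dot. apply (sumR_cv d (fun n i => u n i * u n i)).
  intros i _. apply CV_mult; apply H.
Qed.

Lemma zdot_cv d (u : nat -> vec) x z :
  (forall t, Un_cv (fun n => u n t) (x t)) -> Un_cv (fun n => zdot d z (u n)) (zdot d z x).
Proof.
  intros H. unfold zdot. apply (sumR_cv d (fun n i => IZR (z i) * u n i)).
  intros i _. apply CV_mult. intros eps Heps; exists 0%nat; intros; unfold Rdist;
  rewrite Rminus_diag, Rabs_R0; auto. apply H.
Qed.

Definition incr (phi : nat -> nat) := forall n m, (n < m)%nat -> (phi n < phi m)%nat.

Lemma incr_S phi : (forall n, (phi n < phi (S n))%nat) -> incr phi.
Proof.
  intros H n m Hnm. induction Hnm. apply H. specialize (H m). lia.
Qed.

Lemma incr_ge phi : incr phi -> forall n, (n <= phi n)%nat.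
Proof.
  intros H n. induction n. lia. specialize (H n (S n) ltac:(lia)). lia.
Qed.

Lemma incr_comp phi psi : incr phi -> incr psi -> incr (fun n => phi (psi n)).
Proof. intros H1 H2 n m Hnm. apply H1, H2, Hnm. Qed.

Lemma cv_sub u l phi : Un_cv u l -> incr phi -> Un_cv (fun n => u (phi n)) l.
Proof.
  intros H Hp eps Heps. destruct (H eps Heps) as [N HN]. exists N.
  intros n Hn. apply HN. pose proof (incr_ge phi Hp n). lia.
Qed.

Lemma cv_eventually u l : (exists N, forall n, (n >= N)%nat -> u n = l) -> Un_cv u l.
Proof.
  intros [N HN] eps Heps. exists N. intros n Hn. rewrite HN by auto. unfold Rdist.
  rewrite Rminus_diag, Rabs_R0; auto.
Qed.

Lemma cv_pos u l : Un_cv u l -> l > 0 -> exists N, forall n, (n >= N)%nat -> u n > 0.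
Proof.
  intros H Hl. destruct (H l Hl) as [N HN]. exists N. intros n Hn.
  specialize (HN n Hn). unfold Rdist in HN. apply Rabs_def2 in HN. lra.
Qed.

Lemma cv_neg u l : Un_cv u l -> l < 0 -> exists N, forall n, (n >= N)%nat -> u n < 0.
Proof.
  intros H Hl. destruct (H (-l) ltac:(lra)) as [N HN]. exists N. intros n Hn.
  specialize (HN n Hn). unfold Rdist in HN. apply Rabs_def2 in HN. lra.
Qed.

Lemma cv_ext u v l : (forall n, u n = v n) -> Un_cv u l -> Un_cv v l.
Proof.
  intros H Hu eps Heps. destruct (Hu eps Heps) as [N HN]. exists N. intros; rewrite <- H; auto.
Qed.

Lemma inf_often_sub (P : nat -> Prop) : (forall N, exists n, (n >= N)%nat /\ P n) ->
  exists phi, incr phi /\ forall n, P (phi n).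
Proof.
  intros H.
  set (sel := fun N => proj1_sig (constructive_indefinite_description _ (H N))).
  assert (Hs : forall N, (sel N >= N)%nat /\ P (sel N)).
  { intros N. unfold sel. destruct (constructive_indefinite_description _ (H N)); auto. }
  exists (fix phi n := match n with O => sel O | S k => sel (S (phi k)) end).
  split.
  - apply incr_S. intros n. simpl. destruct (Hs (S ((fix phi n := match n with O => sel O | S k => sel (S (phi k)) end) n))). lia.
  - intros [|n]; simpl; apply Hs.
Qed.

Lemma bw1 (u : nat -> R) : (forall n, -1 <= u n <= 1) ->
  exists phi, incr phi /\ exists l, Un_cv (fun n => u (phi n)) l.
Proof.
  intros Hb.
  destruct (Bolzano_Weierstrass u (fun c => -1 <= c <= 1) (compact_P3 (-1) 1) Hb) as [l Hl].
  assert (H : forall N k, exists p, (p >= N)%nat /\ Rabs (u p - l) < / INR (S k)).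
  { intros N k.
    assert (pos : 0 < / INR (S k)) by (apply Rinv_0_lt_compat; apply lt_0_INR; lia).
    destruct (Hl (disc l (mkposreal _ pos)) N) as [p [Hp1 Hp2]].
    - exists (mkposreal _ pos). intros y Hy; auto.
    - exists p; split; auto. }
  set (sel := fun N k => proj1_sig (constructive_indefinite_description _ (H N k))).
  assert (Hs : forall N k, (sel N k >= N)%nat /\ Rabs (u (sel N k) - l) < / INR (S k)).
  { intros N k. unfold sel. destruct (constructive_indefinite_description _ (H N k)); auto. }
  set (phi := fix phi n := match n with O => sel O O | S k => sel (S (phi k)) (S k) end).
  assert (Hphi : forall n, Rabs (u (phi n) - l) < / INR (S n)).
  { intros [|n]; simpl; apply Hs. }
  exists phi. split.
  - apply incr_S. intros n. simpl. destruct (Hs (S (phi n)) (S n)). lia.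
  - exists l. intros eps Heps.
    destruct (INR_archimed eps 1 Heps) as [N HN].
    exists N. intros n Hn. unfold Rdist.
    apply Rlt_le_trans with (/ INR (S n)); auto.
    assert (INR N <= INR (S n)) by (apply le_INR; lia).
    assert (0 < INR (S n)) by (apply lt_0_INR; lia).
    apply Rmult_le_reg_l with (INR (S n)); auto.
    rewrite Rinv_r by lra. nra.
Qed.

Lemma bw (d : nat) (u : nat -> vec) : (forall n t, (t < d)%nat -> -1 <= u n t <= 1) ->
  forall k, (k <= d)%nat -> exists phi, incr phi /\ exists l : vec,
    forall t, (t < k)%nat -> Un_cv (fun n => u (phi n) t) (l t).
Proof.
  intros Hb k. induction k; intros Hkd.
  - exists (fun n => n). split. intros n m; auto. exists vzero. intros; lia.
  - destruct IHk as [phi [Hphi [l Hl]]]. lia.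
    destruct (bw1 (fun n => u (phi n) k)) as [psi [Hpsi [lk Hlk]]].
    { intros; apply Hb; lia. }
    exists (fun n => phi (psi n)). split. apply incr_comp; auto.
    exists (fun t => if Nat.eq_dec t k then lk else l t).
    intros t Ht. destruct (Nat.eq_dec t k) as [->|ne]. auto.
    apply (cv_sub (fun n => u (phi n) t)). apply Hl; lia. auto.
Qed.

Lemma bwd (d : nat) (u : nat -> vec) : (forall n, in_Rd d (u n) /\ dot d (u n) (u n) = 1) ->
  exists phi, incr phi /\ exists l : vec, in_Rd d l /\
    forall t, Un_cv (fun n => u (phi n) t) (l t).
Proof.
  intros H.
  destruct (bw d u (fun k t Ht => coord_bound d (u k) t (proj2 (H k)) Ht) d (le_n d)) as [phi [Hphi [l Hl]]].
  exists phi; split; auto.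
  exists (fun t => if lt_dec t d then l t else 0). split.
  - intros t Ht. destruct (lt_dec t d) as [Ht2|Ht2]; [lia|auto].
  - intros t. destruct (lt_dec t d) as [Ht|Ht]. apply Hl; auto.
    apply cv_eventually. exists 0%nat. intros n _. apply (proj1 (H (phi n))). lia.
Qed.


Definition orth_bound_d := MC.orth_bound_d.

Definition inS (S : vec -> Prop) (E : list vec) := forall j, (j < length E)%nat -> S (nth j E vzero).

Lemma S_sum d S m (g : nat -> vec) : is_subspace d S -> (forall i, (i < m)%nat -> S (g i)) ->
  S (fun t => sumR m (fun i => g i t)).
Proof.
  intros [H0 [H1 [H2 H3]]] Hg. induction m; simpl.
  - exact H1.
  - apply (H2 (fun t => sumR m (fun i => g i t)) (g m)). apply IHm; intros; apply Hg; lia. apply Hg; lia.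
Qed.

Lemma dot_sum_l d m (g : nat -> vec) z :
  dot d (fun t => sumR m (fun i => g i t)) z = sumR m (fun i => dot d (g i) z).
Proof.
  unfold dot. rewrite <- sumR_swap. apply sumR_ext. intros t _.
  rewrite Rmult_comm, <- sumR_scal. apply sumR_ext. intros; lra.
Qed.

Lemma dot_scal_l d a x z : dot d (fun t => a * x t) z = a * dot d x z.
Proof. unfold dot. rewrite <- sumR_scal. apply sumR_ext. intros; lra. Qed.

Lemma dot_add_l d x y z : dot d (fun t => x t + y t) z = dot d x z + dot d y z.
Proof. unfold dot. rewrite <- sumR_plus. apply sumR_ext. intros; lra. Qed.

Definition proj d (E : list vec) (y : vec) : vec :=
  fun t => sumR (length E) (fun i => dot d y (nth i E vzero) * nth i E vzero t).

Lemma proj_dot d E y j : orthonormal d E -> (j < length E)%nat ->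
  dot d (proj d E y) (nth j E vzero) = dot d y (nth j E vzero).
Proof.
  intros HE Hj. unfold proj.
  pose proof (dot_sum_l d (length E) (fun i t => dot d y (nth i E vzero) * nth i E vzero t) (nth j E vzero)) as Hs.
  cbv beta in Hs. rewrite Hs.
  rewrite (sumR_ext _ _ (fun i => dot d y (nth i E vzero) * (if Nat.eqb i j then 1 else 0))).
  - apply sumR_delta; auto.
  - intros i Hi. rewrite dot_scal_l, HE; auto.
Qed.

Lemma decomp d S E y : is_subspace d S -> orthonormal d E -> inS S E ->
  (forall E', orthonormal d E' -> inS S E' -> (length E' <= length E)%nat) ->
  S y -> forall t, y t = proj d E y t.
Proof.
  intros HS HE HES Hmax Hy t.
  pose proof HS as [H0 [H1 [H2 H3]]].
  set (w := fun t => y t + (-1) * proj d E y t).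
  assert (Sw : S w).
  { apply H2; auto. apply H3. unfold proj.
    apply (S_sum d S (length E) (fun i t => dot d y (nth i E vzero) * nth i E vzero t)); auto.
  }
  assert (wE : forall j, (j < length E)%nat -> dot d w (nth j E vzero) = 0).
  { intros j Hj. unfold w. rewrite dot_add_l, dot_scal_l, proj_dot; auto. lra. }
  assert (Dw : dot d w w = 0).
  { destruct (Req_dec (dot d w w) 0) as [e|ne]; auto. exfalso.
    pose proof (dot_nonneg d w) as Dnn.
    set (c := / sqrt (dot d w w)).
    assert (Hc : c * (c * dot d w w) = 1).
    { unfold c. rewrite <- (sqrt_sqrt (dot d w w)) at 3 by lra.
      assert (0 < sqrt (dot d w w)) by (apply sqrt_lt_R0; lra).
      field. lra. }
    set (w' := fun t => c * w t).
    assert (Ho : orthonormal d (w' :: E)).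
    { intros i j Hi Hj. simpl in Hi, Hj. destruct i as [|i]; destruct j as [|j]; simpl.
      - unfold w'. rewrite dot_scal_l, dot_sym, dot_scal_l. auto.
      - unfold w'. rewrite dot_scal_l, wE by lia. lra.
      - unfold w'. rewrite dot_sym, dot_scal_l, wE by lia. lra.
      - apply HE; lia. }
    assert (Hin : inS S (w' :: E)).
    { intros [|j] Hj; simpl. apply H3; auto. apply HES. simpl in Hj; lia. }
    specialize (Hmax _ Ho Hin). simpl in Hmax. lia. }
  assert (wt : w t = 0).
  { destruct (lt_dec t d). apply (dot_zero d w Dw); auto. apply (H0 w Sw). lia. }
  unfold w in wt. lra.
Qed.

Lemma max_orth d S : is_subspace d S -> exists E, orthonormal d E /\ inS S E /\
  (forall E', orthonormal d E' -> inS S E' -> (length E' <= length E)%nat).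
Proof.
  intros HS. apply NNPP. intros Hno.
  assert (Hgrow : forall n, exists E, orthonormal d E /\ inS S E /\ (length E >= n)%nat).
  { induction n.
    - exists nil. split; [|split]. intros i j Hi; simpl in Hi; lia. intros j Hj; simpl in Hj; lia. simpl; lia.
    - destruct IHn as [E [H1 [H2 H3]]].
      apply NNPP. intros Hn. apply Hno. exists E. split; auto. split; auto.
      intros E' H1' H2'. apply NNPP. intros Hlt. apply Hn. exists E'. split; auto. split; auto. lia. }
  destruct (Hgrow (Datatypes.S d)) as [E [H1 [_ H3]]]. pose proof (orth_bound_d d E H1). lia.
Qed.

Lemma closed_sub d S (u : nat -> vec) x : is_subspace d S -> (forall n, S (u n)) ->
  (forall t, Un_cv (fun n => u n t) (x t)) -> S x.
Proof.
  intros HS Hu Hx.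
  destruct (max_orth d S HS) as [E [HE [HES Hmax]]].
  assert (Hp : x = proj d E x).
  { apply functional_extensionality. intros t.
    apply (UL_sequence (fun n => u n t)); auto.
    apply (cv_ext (fun n => proj d E (u n) t)).
    { intros n. symmetry. apply (decomp d S E); auto. }
    unfold proj. apply (sumR_cv _ (fun n i => dot d (u n) (nth i E vzero) * nth i E vzero t)).
    intros i _. apply CV_mult. apply dot_cv; auto.
    apply cv_eventually. exists 0%nat; auto. }
  rewrite Hp. unfold proj.
  apply (S_sum d S (length E) (fun i t => dot d x (nth i E vzero) * nth i E vzero t)); auto. intros i Hi.
  apply (proj2 (proj2 (proj2 HS))). apply HES; auto.
Qed.


Lemma indic_iff (P Q : Prop) : (P <-> Q) -> indic P = indic Q.
Proof.
  intros H. unfold indic. destruct (excluded_middle_informative P), (excluded_middle_informative Q); tauto.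
Qed.
Lemma indic_true (P : Prop) : P -> indic P = 1.
Proof. intros H. unfold indic. destruct (excluded_middle_informative P); tauto. Qed.
Lemma indic_false (P : Prop) : ~ P -> indic P = 0.
Proof. intros H. unfold indic. destruct (excluded_middle_informative P); tauto. Qed.

Lemma zdot_add d z x y : zdot d z (fun t => x t + y t) = zdot d z x + zdot d z y.
Proof. unfold zdot. rewrite <- sumR_plus. apply sumR_ext. intros; lra. Qed.
Lemma zdot_scal d z a x : zdot d z (fun t => a * x t) = a * zdot d z x.
Proof. unfold zdot. rewrite <- sumR_scal. apply sumR_ext. intros; lra. Qed.
Lemma zdot_ext d z x y : (forall t, (t < d)%nat -> x t = y t) -> zdot d z x = zdot d z y.
Proof. intros H. unfold zdot. apply sumR_ext. intros t Ht. rewrite H; auto. Qed.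

Lemma norm_unit d w : dot d w w <> 0 ->
  dot d (fun t => / sqrt (dot d w w) * w t) (fun t => / sqrt (dot d w w) * w t) = 1.
Proof.
  intros ne. pose proof (dot_nonneg d w) as Dnn.
  rewrite dot_scal_l. rewrite (dot_sym d w (fun t => / sqrt (dot d w w) * w t)). rewrite dot_scal_l.
  assert (0 < sqrt (dot d w w)) by (apply sqrt_lt_R0; lra).
  rewrite <- (sqrt_sqrt (dot d w w)) at 3 by lra. field. lra.
Qed.

Lemma orth_cons d l E : orthonormal d E -> dot d l l = 1 ->
  (forall j, (j < length E)%nat -> dot d (nth j E vzero) l = 0) -> orthonormal d (l :: E).
Proof.
  intros HE Hl HlE i j Hi Hj. simpl in Hi, Hj. destruct i as [|i]; destruct j as [|j]; simpl.
  - auto.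
  - rewrite dot_sym. apply HlE; lia.
  - apply HlE; lia.
  - apply HE; lia.
Qed.

Lemma Ezetas_cons_zero d z l zs : zdot d z l = 0 -> (Ezetas d (l :: zs) z <-> Ezetas d zs z).
Proof.
  intros H0. split.
  - intros [j [Hj [Hlt Hpos]]]. destruct j as [|j]; simpl in *. lra.
    exists j. split; [lia|split]; auto. intros i Hi. apply (Hlt (Datatypes.S i)); lia.
  - intros [j [Hj [Hlt Hpos]]]. exists (Datatypes.S j). simpl. split; [lia|split]; auto.
    intros [|i] Hi; simpl; auto. apply Hlt; lia.
Qed.

Lemma Ezetas_cons_pos d z l zs : zdot d z l > 0 -> Ezetas d (l :: zs) z.
Proof. intros H. exists 0%nat. simpl. split; [lia|split]; auto. intros; lia. Qed.

Lemma Ezetas_cons_neg d z l zs : zdot d z l < 0 -> ~ Ezetas d (l :: zs) z.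
Proof.
  intros H [j [Hj [Hlt Hpos]]]. destruct j as [|j]; simpl in *. lra.
  specialize (Hlt 0%nat ltac:(lia)). simpl in Hlt. lra.
Qed.

Lemma dot_vzero d l : dot d vzero l = 0.
Proof. unfold dot, vzero. rewrite (sumR_ext _ _ (fun _ => 0)). apply sumR_zero. intros; lra. Qed.

Lemma subspace_perp d S l : is_subspace d S -> is_subspace d (fun x => S x /\ dot d x l = 0).
Proof.
  intros [H0 [H1 [H2 H3]]]. split; [|split; [|split]].
  - intros x [Hx _]. auto.
  - split; auto. apply dot_vzero.
  - intros x y [Hx Hxl] [Hy Hyl]. split; auto. rewrite dot_add_l. lra.
  - intros a x [Hx Hxl]. split; auto. rewrite dot_scal_l. rewrite Hxl; lra.
Qed.

Lemma main_ind d : forall m S, is_subspace d S ->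
  (forall E, orthonormal d E -> inS S E -> (length E <= m)%nat) ->
  forall zeta : nat -> vec, (forall n, S (zeta n) /\ dot d (zeta n) (zeta n) = 1) ->
  exists phi, incr phi /\ exists zs, orthonormal d zs /\ inS S zs /\ (1 <= length zs)%nat /\
    forall z, Un_cv (fun n => indic (Ezeta d (zeta (phi n)) z)) (indic (Ezetas d zs z)).
Proof.
  induction m as [|m IH]; intros S HS Hm zeta Hz.
  { exfalso. assert (orthonormal d (zeta 0%nat :: nil)).
    { intros i j Hi Hj; simpl in Hi, Hj. destruct i; [|lia]. destruct j; [|lia]. simpl. apply Hz. }
    assert (inS S (zeta 0%nat :: nil)) by (intros j Hj; simpl in Hj; destruct j; [apply Hz|lia]).
    specialize (Hm _ H H0). simpl in Hm. lia. }
  pose proof HS as [HS0 [HS1 [HS2 HS3]]].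
  destruct (bwd d zeta (fun n => conj (HS0 _ (proj1 (Hz n))) (proj2 (Hz n)))) as [phi1 [Hphi1 [l [Hl Hcv]]]].
  assert (Sl : S l) by (apply (closed_sub d S (fun n => zeta (phi1 n)) l); auto; intros; apply Hz).
  assert (ll : dot d l l = 1).
  { apply (UL_sequence (fun n => dot d (zeta (phi1 n)) (zeta (phi1 n)))).
    apply dot_cv2; auto. apply cv_eventually. exists 0%nat. intros; apply Hz. }
  set (c := fun n => dot d (zeta (phi1 n)) l).
  assert (Hc : Un_cv c 1) by (rewrite <- ll; apply dot_cv; auto).
  set (r := fun n t => zeta (phi1 n) t + (- c n) * l t).
  assert (Sr : forall n, S (r n)) by (intros n; apply HS2; [apply Hz | apply HS3; auto]).
  assert (rl : forall n, dot d (r n) l = 0).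
  { intros n. unfold r. rewrite dot_add_l, dot_scal_l, ll. unfold c. lra. }
  assert (zr : forall z n, zdot d z (zeta (phi1 n)) = zdot d z (r n) + c n * zdot d z l).
  { intros z n. unfold r. rewrite zdot_add, zdot_scal. lra. }
  assert (Hzl : forall z, Un_cv (fun n => zdot d z (zeta (phi1 n))) (zdot d z l))
    by (intros z; apply zdot_cv; auto).
  destruct (classic (forall N, exists n, (n >= N)%nat /\ dot d (r n) (r n) <> 0)) as [Hinf|Hfin].
  - destruct (inf_often_sub _ Hinf) as [phi2 [Hphi2 Hr2]].
    set (eta := fun n t => / sqrt (dot d (r (phi2 n)) (r (phi2 n))) * r (phi2 n) t).
    set (S' := fun x => S x /\ dot d x l = 0).
    assert (HS' : is_subspace d S') by (apply subspace_perp; auto).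
    assert (Hm' : forall E, orthonormal d E -> inS S' E -> (length E <= m)%nat).
    { intros E HE HES.
      assert (orthonormal d (l :: E)) by (apply orth_cons; auto; intros j Hj; apply HES; auto).
      assert (inS S (l :: E)) by (intros [|j] Hj; simpl; auto; apply HES; simpl in Hj; lia).
      specialize (Hm _ H H0). simpl in Hm. lia. }
    assert (Heta : forall n, S' (eta n) /\ dot d (eta n) (eta n) = 1).
    { intros n. split; [split|].
      - unfold eta. apply HS3. auto.
      - unfold eta. rewrite dot_scal_l, rl. lra.
      - unfold eta. apply norm_unit. auto. }
    destruct (IH S' HS' Hm' eta Heta) as [phi3 [Hphi3 [zs [Hzs1 [Hzs2 [Hzs3 Hzs4]]]]]].
    exists (fun n => phi1 (phi2 (phi3 n))). split.
    { apply incr_comp; auto. apply incr_comp; auto. }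
    exists (l :: zs). split; [|split; [|split]].
    + apply orth_cons; auto. intros j Hj. apply Hzs2; auto.
    + intros [|j] Hj; simpl; auto. apply Hzs2. simpl in Hj; lia.
    + simpl; lia.
    + intros z.
      assert (Hsub : Un_cv (fun n => zdot d z (zeta (phi1 (phi2 (phi3 n))))) (zdot d z l)).
      { apply (cv_sub (fun n => zdot d z (zeta (phi1 n)))); auto. apply incr_comp; auto. }
      destruct (Rtotal_order (zdot d z l) 0) as [Hneg|[H0|Hpos]].
      * rewrite indic_false by (apply Ezetas_cons_neg; auto).
        apply cv_eventually. destruct (cv_neg _ _ Hsub Hneg) as [N HN]. exists N.
        intros n Hn. apply indic_false. unfold Ezeta. specialize (HN n Hn). lra.
      * rewrite (indic_iff _ _ (Ezetas_cons_zero d z l zs H0)).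
        apply (cv_ext (fun n => indic (Ezeta d (eta (phi3 n)) z))); auto.
        intros n. apply indic_iff. unfold Ezeta.
        rewrite zr, H0. unfold eta. rewrite zdot_scal.
        assert (0 < / sqrt (dot d (r (phi2 (phi3 n))) (r (phi2 (phi3 n))))).
        { apply Rinv_0_lt_compat, sqrt_lt_R0. pose proof (dot_nonneg d (r (phi2 (phi3 n)))).
          pose proof (Hr2 (phi3 n)). lra. }
        split; intros; nra.
      * rewrite indic_true by (apply Ezetas_cons_pos; auto).
        apply cv_eventually. destruct (cv_pos _ _ Hsub Hpos) as [N HN]. exists N.
        intros n Hn. apply indic_true. unfold Ezeta. specialize (HN n Hn). lra.
  - assert (HN : exists N, forall n, (n >= N)%nat -> dot d (r n) (r n) = 0).
    { apply NNPP. intros Hno. apply Hfin. intros N. apply NNPP. intros Hno2. apply Hno.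
      exists N. intros n Hn. apply NNPP. intros Hne. apply Hno2. exists n. auto. }
    destruct HN as [N HN].
    destruct (cv_pos c 1 Hc ltac:(lra)) as [N2 HN2].
    exists phi1. split; auto. exists (l :: nil). split; [|split; [|split]].
    + intros i j Hi Hj; simpl in Hi, Hj. destruct i; [|lia]. destruct j; [|lia]. simpl. auto.
    + intros j Hj; simpl in Hj. destruct j; [simpl; auto|lia].
    + simpl; lia.
    + intros z. apply cv_eventually. exists (max N N2). intros n Hn.
      apply indic_iff. unfold Ezeta.
      assert (zdot d z (r n) = 0).
      { unfold zdot. rewrite (sumR_ext _ _ (fun _ => 0)). apply sumR_zero.
        intros t Ht. rewrite (dot_zero d (r n) (HN n ltac:(lia)) t Ht). lra. }
      rewrite zr, H. specialize (HN2 n ltac:(lia)).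
      split.
      * intros Hp. exists 0%nat. simpl. split; [lia|split]. intros; lia. nra.
      * intros [j [Hj [_ Hp]]]. simpl in Hj. destruct j; [|lia]. simpl in Hp. nra.
Qed.

Theorem mainTheorem19 (d : nat) (Sigma : vec -> Prop) (zeta : nat -> vec)
  (hSigma : is_subspace d Sigma)
  (hzeta : forall n, Sigma (zeta n) /\ dot d (zeta n) (zeta n) = 1) :
  exists phi : nat -> nat,
    (forall n m, (n < m)%nat -> (phi n < phi m)%nat) /\
    exists zs : list vec,
      orthonormal d zs /\
      (forall j, (j < length zs)%nat -> Sigma (nth j zs vzero)) /\
      (1 <= length zs)%nat /\
      (forall B, basis_of Sigma B -> (length zs <= length B)%nat) /\
      forall z : zvec,
        Un_cv (fun n => indic (Ezeta d (zeta (phi n)) z)) (indic (Ezetas d zs z)).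
Proof.
  destruct (main_ind d d Sigma hSigma (fun E HE _ => orth_bound_d d E HE) zeta hzeta)
    as [phi [Hphi [zs [H1 [H2 [H3 H4]]]]]].
  exists phi. split; [exact Hphi|]. exists zs. split; [auto|split; [auto|split; [auto|split; [|auto]]]].
  intros B [HB1 [HB2 HB3]].
  assert (Hc : forall i, exists c : list R, (i < length zs)%nat ->
      forall t, nth i zs vzero t = lincomb c B t).
  { intros i. destruct (lt_dec i (length zs)) as [Hi|Hi].
    - destruct (HB3 _ (H2 i Hi)) as [c [_ Hc]]. exists c. auto.
    - exists nil. intros; lia. }
  set (cf := fun i => proj1_sig (constructive_indefinite_description _ (Hc i))).
  assert (Hcf : forall i, (i < length zs)%nat -> forall t, nth i zs vzero t = lincomb (cf i) B t).
  { intros i. unfold cf. destruct (constructive_indefinite_description _ (Hc i)). auto. }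
  apply (MC.orth_rank_bound d (length B) zs B (fun i j => nth j (cf i) 0)); auto.
Qed.
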